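(* Let $P$ be a finite poset, $R$ a commutative unital ring, and $D$ a derivation of $I^3(P,R)$. Then for all $x\in P$, $$D(e_x)=\sum_{v\in P,\ x<v}D(e_x)(x,x,v)\,e_{xxv}+\sum_{u\in P,\ u<x}D(e_x)(u,x,x)\,e_{uxx}.$$
   Context: For a finite poset $P$, $P^3_\le=\{(x,y,z)\in P^3: x\le y\le z\}$, and $I^3(P,R)$ is the $R$-module of functions $f:P^3_\le\to R$ with multiplication $(fg)(x_1,x_2,x_3)=\sum f(x_1,y_1,y_2)g(y_1,y_2,x_3)$ over all $x_1\le y_1\le x_2\le y_2\le x_3$. For $x\le y\le z$, $e_{xyz}$ is the function equal to $1$ at $(x,y,z)$ and $0$ elsewhere, and $e_x:=e_{xxx}$. A derivation is an $R$-linear map $D:I^3(P,R)\to I^3(P,R)$ with $D(fg)=D(f)g+fD(g)$. *)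

(* Defs.v *)
From HB Require Import structures.
From mathcomp Require Import all_boot all_order all_algebra.
Set Implicit Arguments. Unset Strict Implicit. Unset Printing Implicit Defensive.
Import Order.POrderTheory GRing.Theory.
Local Open Scope order_scope.

Definition chain3 (d : Order.disp_t) (P : finPOrderType d) :=
  {t : P * P * P | (t.1.1 <= t.1.2) && (t.1.2 <= t.2)}.

Notation I3 P R := {ffun chain3 P -> R}.

(* value of f at (x,y,z); 0 (irrelevant) when (x,y,z) is not in P^3_<= *)
Definition ev d (P : finPOrderType d) (R : comNzRingType) (f : I3 P R)
  (x y z : P) : R :=
  if @insub _ _ (chain3 P) (x, y, z) is Some t then f t else 0%R.

Definition e3 d (P : finPOrderType d) (R : comNzRingType) (x y z : P) : I3 P R :=
  [ffun t : chain3 P => if val t == (x, y, z) then 1%R else 0%R].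

Definition mul3 d (P : finPOrderType d) (R : comNzRingType) (f g : I3 P R)
  : I3 P R :=
  [ffun t : chain3 P =>
     let x1 : P := (val t).1.1 in let x2 : P := (val t).1.2 in
     let x3 : P := (val t).2 in
     (\sum_(y1 : P) \sum_(y2 : P |
        [&& x1 <= y1, y1 <= x2, x2 <= y2 & y2 <= x3]%O)
        ev f x1 y1 y2 * ev g y1 y2 x3)%R].

Definition sc3 d (P : finPOrderType d) (R : comNzRingType) (a : R) (f : I3 P R)
  : I3 P R := [ffun t => (a * f t)%R].

Definition derivation3 d (P : finPOrderType d) (R : comNzRingType)
  (D : I3 P R -> I3 P R) : Prop :=
  (forall (a : R) (f g : I3 P R), D (sc3 a f + g)%R = (sc3 a (D f) + D g)%R) /\
  (forall f g : I3 P R, D (mul3 f g) = (mul3 (D f) g + mul3 f (D g))%R).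

(* Main.v *)
Require Import Defs.
From HB Require Import structures.
From mathcomp Require Import all_boot all_order all_algebra.
Import Order.POrderTheory GRing.Theory.
Local Open Scope ring_scope.
Set Implicit Arguments. Unset Strict Implicit.

Lemma ev_e3 d (P : finPOrderType d) (R : comNzRingType) (x y z a b c : P) :
  ev (e3 R x y z) a b c =
  if ((a <= b) && (b <= c))%O then (((a,b),c) == ((x,y),z))%:R else 0%R.
Proof.
rewrite /ev /e3; case: insubP => [t Hc Ht|Hn] /=.
  by rewrite ffunE Ht /= Hc; case: eqP.
by rewrite /= in Hn; rewrite (negbTE Hn).
Qed.

Lemma ev_val d (P : finPOrderType d) (R : comNzRingType) (f : I3 P R) (t : chain3 P) :
  f t = ev f (val t).1.1 (val t).1.2 (val t).2.
Proof.
rewrite /ev; case: insubP => [u _ Hu|Hn].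
  by congr (fun_of_fin f _); apply: val_inj; rewrite Hu; case: (val t) => [[]].
by move: (valP t) Hn; case: (val t) => [[a b] c] /= ->.
Qed.

Lemma sum2 d (P : finPOrderType d) (R : comNzRingType) (x : P) (F : P -> P -> R)
  (Q : P -> P -> bool) :
  (forall y1 y2, (y1 != x) || (y2 != x) -> F y1 y2 = 0%R) ->
  (\sum_(y1 : P) \sum_(y2 : P | Q y1 y2) F y1 y2 = if Q x x then F x x else 0)%R.
Proof.
move=> HF; rewrite (bigD1 x) //=. rewrite [X in _ + X]big1 ?addr0 => [|y1 ne]; last first.
  by rewrite big1 // => y2 _; rewrite HF // ne.
rewrite big_mkcond (bigD1 x) //= big1 ?addr0 // => y2 ne.
by case: ifP => // _; rewrite HF // ne orbT.
Qed.

Lemma sum1 d (P : finPOrderType d) (R : comNzRingType) (Q : pred P) (h : P -> R) (c : P) :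
  (\sum_(v | Q v) h v * (if c == v then 1 else 0) = if Q c then h c else 0)%R.
Proof.
case Qc: (Q c).
  rewrite (bigD1 c) //= eqxx mulr1 big1 ?addr0 // => v /andP[_ ne].
  by rewrite eq_sym (negbTE ne) mulr0.
rewrite big1 // => v Qv; case: eqP => [e|_]; last by rewrite mulr0.
by rewrite e Qv in Qc.
Qed.

Theorem lemma4p1 (d : Order.disp_t) (P : finPOrderType d) (R : comNzRingType)
  (D : I3 P R -> I3 P R) (HD : derivation3 D) (x : P) :
  D (e3 R x x x) =
    (\sum_(v : P | (x < v)%O) sc3 (ev (D (e3 R x x x)) x x v) (e3 R x x v)
     + \sum_(u : P | (u < x)%O) sc3 (ev (D (e3 R x x x)) u x x) (e3 R u x x))%R.
Proof.
case: HD => _ HL.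
set e := e3 R x x x; set g := D e.
have ee : mul3 e e = e.
  apply/ffunP => t; rewrite ffunE [RHS](ev_val e t).
  case: t => [[[a b] c] H] /=.
  rewrite (@sum2 _ _ _ x) => [|y1 y2 ne]; last first.
    rewrite [ev _ y1 y2 c]ev_e3 !xpair_eqE.
    by case/orP: ne => /negbTE ->; rewrite ?andbF; case: ifP; rewrite ?mulr0.
  rewrite !ev_e3 !xpair_eqE; move/andP: H => /= [hab hbc].
  case: (eqVneq b x) => [eb|nb].
    subst b; rewrite hab hbc !lexx /= !eqxx /= !andbT.
    by case: (a == x); case: (c == x); rewrite /= ?mulr1 ?mulr0.
  rewrite hab hbc andbF /=.
  case: ifP => // /and4P [_ h1 h2 _].
  by move: nb; rewrite eq_le h1 h2.
have Hg : g = mul3 g e + mul3 e g by rewrite /g -HL ee.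
have key : forall a b c, (a <= b)%O -> (b <= c)%O -> ev g a b c =
  if [&& a <= x, x <= b, b <= x & x <= c]%O
  then ev g a x x * (c == x)%:R + (a == x)%:R * ev g x x c else 0.
  move=> a b c hab hbc.
  have Hc : ((a,b,c).1.1 <= (a,b,c).1.2 <= (a,b,c).2)%O by rewrite /= hab hbc.
  pose t : chain3 P := exist _ (a,b,c) Hc.
  have := ev_val g t; rewrite {1}Hg !ffunE /= => <-.
  rewrite (@sum2 _ _ _ x) => [|y1 y2 ne]; last first.
    rewrite [ev e y1 y2 c]ev_e3 !xpair_eqE.
    by case/orP: ne => /negbTE ->; rewrite ?andbF; case: ifP; rewrite ?mulr0.
  rewrite (@sum2 _ _ _ x) => [|y1 y2 ne]; last first.
    rewrite [ev e a y1 y2]ev_e3 !xpair_eqE.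
    by case/orP: ne => /negbTE ->; rewrite ?andbF; case: ifP; rewrite ?mul0r.
  rewrite !ev_e3 !xpair_eqE.
  case: ifP => [/and4P[h1 h2 h3 h4]|]; last by rewrite addr0.
  by rewrite h1 h4 !lexx /= !eqxx /= !andbT.
have g0 : ev g x x x = 0.
  have := key x x x (lexx _) (lexx _); rewrite !lexx !eqxx /= mulr1 mul1r => h.
  by move: (congr1 (fun z => z - ev g x x x) h); rewrite subrr addrK => <-.
apply/ffunP => t; rewrite [LHS]ev_val !ffunE !sum_ffunE.
case: t => [[[a b] c] H] /=; have /andP [hab hbc] := H.
rewrite key //.
under [X in _ = X + _]eq_bigr do rewrite !ffunE /= !xpair_eqE.
under [X in _ = _ + X]eq_bigr do rewrite !ffunE /= !xpair_eqE.
case: (eqVneq b x) => [eb|nb]; last first.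
  rewrite !big1 ?addr0 //; first by case: ifP => // /and4P [_ h1 h2 _]; move: nb; rewrite eq_le h1 h2.
  - by move=> i _; rewrite andbF /= mulr0.
  - by move=> i _; rewrite andbF /= mulr0.
subst b; rewrite /= in hab hbc; rewrite hab hbc !lexx /=.
under [X in _ = X + _]eq_bigr do rewrite andbT.
under [X in _ = _ + X]eq_bigr do rewrite andbT.
case: (eqVneq a x) => [ea|na].
  subst a; rewrite /= ?mulr1n ?mulr0n sum1.
  case: (eqVneq c x) => [ec|nc].
    by subst c; rewrite /= ?mulr1n ?mulr0n; under eq_bigr do rewrite andbT; rewrite sum1 ltxx g0 mul0r mulr0 !addr0.
  rewrite big1 => [|i _]; last by rewrite andbF mulr0.
  by rewrite /= ?mulr1n ?mulr0n lt_def nc hbc mulr0 add0r mul1r addr0.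
rewrite big1 => [|i _]; last by rewrite /= mulr0.
case: (eqVneq c x) => [ec|nc].
  by subst c; rewrite /= ?mulr1n ?mulr0n; under eq_bigr do rewrite andbT; rewrite sum1 lt_def eq_sym na hab mulr1 mul0r !add0r addr0.
by rewrite big1 => [|i _]; rewrite ?andbF ?mulr0 ?mul0r ?addr0.
Qed.
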